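(* Let $N$ be a positive integer (the input size) and let $M = N^{O(1)}$ be a positive integer (the input range). Then there exists a one-layer transformer with a single head of sum-of-determinants $2$-simplicial attention (defined in the context) with attention head dimension $d = 7$ such that for every input $X = (x_1,\dots,x_N) \in [M]^N$ and every $i \in \{1,\dots,N\}$, the transformer's output at position $i$ equals $1$ if there exist $j_1, j_2 \in \{1,\dots,N\}$ with $x_i + x_{j_1} + x_{j_2} \equiv 0 \pmod M$, and equals $0$ otherwise.
   Context: $[M]=\{0,1,\dots,M-1\}$ (residues mod $M$). The transformer model class: each input element $x_j$ is mapped by an input MLP $\phi$ to an embedding $\phi(x_j)$; linear maps $Q, K, K'$ produce the query ${\bm q}_i = Q\phi(x_i)\in\mathbb{R}^d$ and keys ${\bm k}_{j} = K\phi(x_{j})$, ${\bm k}'_{j} = K'\phi(x_{j})$, and linear maps $V, V'$ produce values ${\bm v}_j = V\phi(x_j)$, ${\bm v}'_j = V'\phi(x_j)$. For a vector ${\bm u}$, write ${\bm u}^{(l)}$ for its $l$-th consecutive block of $3$ coordinates (coordinates $3(l-1)+1,\dots,3l$). The attention logit for query position $i$ and key pair $(j_1,j_2)$ is the sum-of-determinants trilinear form $A_{i j_1 j_2} = \sum_{l} \det\big([{\bm q}_i^{(l)}, {\bm k}_{j_1}^{(l)}, {{\bm k}'_{j_2}}^{(l)}]\big)$ over the complete $3$-coordinate blocks (for $d=7$, blocks $l=1,2$), where $[\cdot,\cdot,\cdot]$ stacks the three $3$-vectors into a $3\times 3$ matrix. Attention weights are the softmax of the logits over all pairs $(j_1,j_2)$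 (and, as in the standard Match-type constructions, over an additional designated ''blank'' pair whose logit is ${\bm q}_i\cdot{\bm k}_{\mathrm{blank}}$ for a fixed key vector ${\bm k}_{\mathrm{blank}}\in\mathbb{R}^d$ and whose value is a fixed vector), and the attention output at position $i$ is $\sum_{j_1,j_2} S_{i j_1 j_2}\,({\bm v}_{j_1}\circ {\bm v}'_{j_2})$ plus the blank pair's weighted value, where $\circ$ is the elementwise product. The final output at position $i$ is an output MLP $\psi$ applied to the attention output. *)

(* Defs.v *)
From HB Require Import structures.
From mathcomp Require Import all_boot all_order all_algebra.
From mathcomp Require Import reals sequences exp.
Set Implicit Arguments. Unset Strict Implicit. Unset Printing Implicit Defensive.
Import Order.TTheory GRing.Theory Num.Theory.
Local Open Scope ring_scope.

Section Transformer.
Variable R : realType.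

Definition relu (x : R) : R := Num.max x 0.

Inductive is_mlp : forall a b : nat, ('rV[R]_a -> 'rV[R]_b) -> Prop :=
| mlp_affine a b (W : 'M[R]_(a, b)) (c : 'rV[R]_b) :
    is_mlp (fun v => v *m W + c)
| mlp_layer a h b (W : 'M[R]_(a, h)) (c : 'rV[R]_h) (g : 'rV[R]_h -> 'rV[R]_b) :
    is_mlp g -> is_mlp (fun v => g (map_mx relu (v *m W + c))).

(* k-th coordinate (0-based) of a row vector, 0 if out of range *)
Definition coord d (u : 'rV[R]_d) (k : nat) : R :=
  \sum_(j < d | val j == k) u 0 j.

Definition blk d (u : 'rV[R]_d) (l : nat) (r : 'I_3) : R := coord u (3 * l + r).

Definition mx3 (a b c : 'I_3 -> R) : 'M[R]_3 :=
  \matrix_(r < 3, s < 3) (if s == 0 :> nat then a r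
                         else if s == 1 :> nat then b r else c r).

Definition sodet d (q k k' : 'rV[R]_d) : R :=
  \sum_(l < d %/ 3) \det (mx3 (blk q l) (blk k l) (blk k' l)).

Definition dotv d (u v : 'rV[R]_d) : R := \sum_(k < d) u 0 k * v 0 k.

Definition hadamard d (u v : 'rV[R]_d) : 'rV[R]_d := \row_k (u 0 k * v 0 k).

Record transformer (d : nat) := Transformer {
  emb : nat;
  phi : 'rV[R]_1 -> 'rV[R]_emb;
  phi_mlp : is_mlp phi;
  Qm : 'M[R]_(emb, d);
  Km : 'M[R]_(emb, d);
  K'm : 'M[R]_(emb, d);
  Vm : 'M[R]_(emb, d);
  V'm : 'M[R]_(emb, d);
  k_blank : 'rV[R]_d;
  v_blank : 'rV[R]_d;
  psi : 'rV[R]_d -> 'rV[R]_1;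
  psi_mlp : is_mlp psi }.

Variables (d : nat) (T : transformer d) (N : nat) (x : 'I_N -> nat).

Definition embed (j : 'I_N) : 'rV[R]_(emb T) := phi T (\row_(_ < 1) (x j)%:R).
Definition query j := embed j *m Qm T.
Definition key j := embed j *m Km T.
Definition key' j := embed j *m K'm T.
Definition val1 j := embed j *m Vm T.
Definition val2 j := embed j *m V'm T.

Definition logit (i j1 j2 : 'I_N) : R := sodet (query i) (key j1) (key' j2).
Definition blank_logit (i : 'I_N) : R := dotv (query i) (k_blank T).

Definition partition (i : 'I_N) : R :=
  \sum_(j1 < N) \sum_(j2 < N) expR (logit i j1 j2) + expR (blank_logit i).

Definition attn_out (i : 'I_N) : 'rV[R]_d :=
  \sum_(j1 < N) \sum_(j2 < N)
      (expR (logit i j1 j2) / partition i) *: hadamard (val1 j1) (val2 j2)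
  + (expR (blank_logit i) / partition i) *: v_blank T.

Definition tf_output (i : 'I_N) : R := psi T (attn_out i) 0 0.

End Transformer.

(* Main.v *)
Require Import Defs.
From HB Require Import structures.
From mathcomp Require Import all_boot all_order all_algebra.
From mathcomp Require Import reals sequences exp trigo.
From mathcomp Require Import ring lra zify.
Import Order.TTheory GRing.Theory Num.Theory.
Local Open Scope ring_scope.

Section Trig.
Variable R : realType.

Lemma cos_period (x : R) q : cos (x + (pi *+ 2) *+ q) = cos x.
Proof.
elim: q => [|q IH]; first by rewrite mulr0n addr0.
by rewrite mulrSr addrA cosD2pi.
Qed.

Definition th (M : nat) : R := pi *+ 2 / M%:R.

Lemma cos_mod M s : (0 < M)%N -> cos (s%:R * th M) = cos ((s %% M)%:R * th M).
Proof.
move=> HM.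
have HM0 : (M%:R : R) != 0 by rewrite pnatr_eq0 -lt0n.
rewrite {1}(divn_eq s M) natrD mulrDl addrC.
suff -> : (s %/ M * M)%:R * th M = (pi *+ 2) *+ (s %/ M) by rewrite cos_period.
rewrite /th natrM -mulr_natl; field; done.
Qed.

Lemma cos_lt1 M r : (0 < r < M)%N -> cos (r%:R * th M) < 1.
Proof.
move=> /andP[r0 rM].
have M0 : (0 < M)%N by apply: leq_trans rM.
have HM : (0 : R) < M%:R by rewrite ltr0n.
have Hr : (0 : R) < r%:R by rewrite ltr0n.
have HrM : (r%:R : R) < M%:R by rewrite ltr_nat.
have pi0 : (0 : R) < pi := pi_gt0 R.
set x := r%:R * th M.
have x0 : 0 < x by rewrite /x /th mulr_gt0 // divr_gt0 // mulrn_wgt0.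
have x2 : x < pi *+ 2.
  rewrite /x /th mulrA ltr_pdivrMr // mulrC ltr_pM2l //.
  by rewrite mulrn_wgt0.
have key : forall y : R, 0 < y <= pi -> cos y < 1.
  move=> y /andP[y0 ypi]; rewrite -cos0.
  have := @ltr_cos R 0 y; rewrite !in_itv /= lexx (ltW pi0) (ltW y0) ypi => /(_ isT isT) ->.
  done.
case: (lerP x pi) => [xpi|pix]; first by apply: key; rewrite x0 xpi.
rewrite -cosN -(cos_period (- x) 1) mulr1n.
apply: key; rewrite mulr2n; apply/andP; split; lra.
Qed.

End Trig.

Section Mx.
Variable R : realType.

Lemma det3 (g : nat -> nat -> R) : \det (\matrix_(i < 3, j < 3) g (val i) (val j)) =
  g 0 0 * (g 1 1 * g 2 2 - g 1 2 * g 2 1)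
  - g 0 1 * (g 1 0 * g 2 2 - g 1 2 * g 2 0)
  + g 0 2 * (g 1 0 * g 2 1 - g 1 1 * g 2 0).
Proof.
rewrite (expand_det_row _ ord0) !big_ord_recr big_ord0 /= /cofactor /=.
rewrite !(expand_det_row _ ord0) !big_ord_recr big_ord0 /= /cofactor /=.
rewrite !big_ord0 !det_mx11 !mxE /=.
rewrite /bump /=. ring.
Qed.

Lemma det_blk d (q k k' : 'rV[R]_d) (l : nat) :
  \det (mx3 (blk q l) (blk k l) (blk k' l)) =
  let a n := Defs.coord q (3 * l + n)%N in
  let b n := Defs.coord k (3 * l + n)%N in
  let c n := Defs.coord k' (3 * l + n)%N in
  a 0%N * (b 1%N * c 2%N - c 1%N * b 2%N) - b 0%N * (a 1%N * c 2%N - c 1%N * a 2%N)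
  + c 0%N * (a 1%N * b 2%N - b 1%N * a 2%N).
Proof.
exact: (det3 (fun n m => if m == 0 then Defs.coord q (3 * l + n)
   else if m == 1 then Defs.coord k (3 * l + n) else Defs.coord k' (3 * l + n))).
Qed.

Lemma coord_mx d m (F : nat -> nat -> R) (k : 'I_m) n : (n < d)%N ->
  Defs.coord (row k (\matrix_(a < m, j < d) F a j)) n = F k n.
Proof.
by move=> Hn; rewrite /Defs.coord (big_pred1 (Ordinal Hn)) ?mxE.
Qed.

Lemma sum_ind n m (F : nat -> R) : (m < n)%N ->
  \sum_(j < n) F j * ((j == m :> nat)%:R) = F m.
Proof.
move=> Hm; rewrite (bigD1 (Ordinal Hm)) //= eqxx mulr1 big1 ?addr0 //.
move=> j /negbTE Hj; rewrite (_ : (val j == m) = false) ?mulr0 //.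
Qed.

Lemma relu_pos (y : R) : 0 <= y -> relu y = y.
Proof. by move=> H; rewrite /relu max_l. Qed.
Lemma relu_neg (y : R) : y <= 0 -> relu y = 0.
Proof. by move=> H; rewrite /relu max_r. Qed.

End Mx.

Section Constr.
Variable R : realType.

Definition W1 M : 'M[R]_(1, M.+2) := const_mx 1.
Definition c1 M : 'rV[R]_(M.+2) := \row_j (1 - (val j)%:R).
Definition W2 M : 'M[R]_(M.+2, M) := \matrix_(j, k)
  (((val j == val k)%:R) - 2 * (val j == (val k).+1)%:R + (val j == (val k).+2)%:R).
Definition phiF M (v : 'rV[R]_1) : 'rV[R]_M := map_mx (@relu R) (v *m W1 M + c1 M) *m W2 M + 0.
Lemma phi_mlp M : is_mlp (phiF M).
Proof. exact: (mlp_layer (W1 M) (c1 M) (mlp_affine (W2 M) 0)). Qed.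

Lemma phiE M n (Hn : (n < M)%N) :
  phiF M (\row_(_ < 1) n%:R) = delta_mx 0 (Ordinal Hn).
Proof.
apply/rowP => k; rewrite !mxE.
set F := fun m : nat => relu ((n%:R : R) + (1 - m%:R)).
rewrite (eq_bigr (fun j : 'I_M.+2 => F j * (val j == val k)%:R
   - 2 * (F j * (val j == (val k).+1)%:R) + F j * (val j == (val k).+2)%:R)); last first.
  move=> j _; rewrite !mxE big_ord1 !mxE /F mulr1; ring.
rewrite !big_split /= sumrN -!mulr_sumr !sum_ind; last first.
1-3: by have := ltn_ord k; lia.
rewrite /F addr0.
have le1 : forall a b : nat, (a <= b)%N -> (a%:R : R) <= b%:R by move=> a b; rewrite ler_nat.
have -> : (k == Ordinal Hn) = (val k == n) by [].
case: k => k Hk /=.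
have E1 : (k.+1%:R : R) = k%:R + 1 by rewrite natr1.
have E2 : (k.+2%:R : R) = k%:R + 2 by rewrite -natr1 E1 -addrA.
rewrite E1 E2.
case: (ltngtP n k) => H.
- have := le1 _ _ H; rewrite -natr1 => H'.
  rewrite !relu_neg ?(gtn_eqF H); [|lra..].
  by rewrite mulr0 subrr addr0.
- have := le1 _ _ H; rewrite -natr1 => H'.
  rewrite !relu_pos ?(ltn_eqF H); [|lra..].
  rewrite /=; ring.
- rewrite H relu_pos ?relu_neg /=; [|lra..].
  ring.

Qed.

Definition W3 : 'M[R]_(7, 2) := \matrix_(i, j) (if val i == 0%N then -2 else 0).
Definition c3 : 'rV[R]_2 := \row_j (if val j == 0%N then 3/2 else 1/2).
Definition W4 : 'M[R]_(2, 1) := \matrix_(j, k) (if val j == 0%N then 1 else -1).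
Definition psiF (v : 'rV[R]_7) : 'rV[R]_1 := map_mx (@relu R) (v *m W3 + c3) *m W4 + 0.
Lemma psi_mlp : is_mlp psiF.
Proof. exact: (mlp_layer W3 c3 (mlp_affine W4 0)). Qed.

Lemma psiE v : psiF v 0 0 = relu (v 0 0 * -2 + 3/2) - relu (v 0 0 * -2 + 1/2).
Proof.
rewrite !mxE !big_ord_recr big_ord0 /= !mxE.
rewrite !big_ord_recl big_ord0 /= !mxE /= !big_ord0 !mulr0 !addr0 add0r mulr1 mulrN1.
by [].
Qed.



Definition cs M n : R := cos (n%:R * th R M).
Definition sn M n : R := sin (n%:R * th R M).
Definition qv M (lam : R) (a : nat) (n : nat) : R :=
  match n with 2%N => lam * sn M a | 5%N => lam * cs M a | 6%N => 1 | _ => 0 end.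
Definition kv M (b : nat) (n : nat) : R :=
  match n with 0%N => cs M b | 1%N => sn M b | 3%N => cs M b | 4%N => sn M b | _ => 0 end.
Definition k'v M (c : nat) (n : nat) : R :=
  match n with 0%N => cs M c | 1%N => - sn M c | 3%N => sn M c | 4%N => cs M c | _ => 0 end.
Definition Qm M lam : 'M[R]_(M, 7) := \matrix_(a, j) qv M lam a j.
Definition Km M : 'M[R]_(M, 7) := \matrix_(a, j) kv M a j.
Definition K'm M : 'M[R]_(M, 7) := \matrix_(a, j) k'v M a j.
Definition kb (tau : R) : 'rV[R]_7 := \row_j (if val j == 6%N then tau else 0).
Definition vb : 'rV[R]_7 := \row_j (if val j == 0%N then 1 else 0).

Definition TF M lam tau : transformer R 7 :=
  @Transformer R 7 M (phiF M) (phi_mlp M) (Qm M lam) (Km M) (K'm M) 0 0 (kb tau) vb psiF psi_mlp.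

Lemma embedE M lam tau N (x : 'I_N -> 'I_M) (A : 'M[R]_(M, 7)) i :
  embed (TF M lam tau) (fun j => val (x j)) i *m A = row (x i) A.
Proof.
rewrite /embed /= phiE rowE; congr (delta_mx _ _ *m _); exact: val_inj.
Qed.

Lemma logitE M lam tau N (x : 'I_N -> 'I_M) i j1 j2 :
  logit (TF M lam tau) (fun j => val (x j)) i j1 j2 =
  lam * cos ((x i + x j1 + x j2)%:R * th R M).
Proof.
rewrite /logit /query /key /key' !embedE /= /sodet.
change (7 %/ 3)%N with 2%N.
rewrite big_ord_recr big_ord1 /= !det_blk /= !coord_mx //.
rewrite /qv /kv /k'v /cs /sn /= !natrD !mulrDl !cosD !sinD.
ring.
Qed.


Lemma blankE M lam tau N (x : 'I_N -> 'I_M) i :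
  blank_logit (TF M lam tau) (fun j => val (x j)) i = tau.
Proof.
rewrite /blank_logit /dotv /query embedE.
rewrite !big_ord_recr big_ord0 /= !mxE /= /qv /=.
ring.
Qed.

Lemma attnE M lam tau N (x : 'I_N -> 'I_M) i :
  attn_out (TF M lam tau) (fun j => val (x j)) i 0 0 =
  expR (blank_logit (TF M lam tau) (fun j => val (x j)) i) /
    Defs.partition (TF M lam tau) (fun j => val (x j)) i.
Proof.
rewrite /attn_out !mxE summxE big1 ?add0r; last first.
  move=> j1 _; rewrite summxE big1 // => j2 _.
  rewrite !mxE /val1 /= big1 ?mul0r ?mulr0 // => j _; rewrite !mxE; apply: mulr0.
by rewrite /= mulr1.
Qed.

Lemma fin_gap (P : pred nat) (f : nat -> R) K :
  (forall s, P s -> 0 < f s) ->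
  exists2 d, 0 < d & forall s, (s < K)%N -> P s -> d <= f s.
Proof.
move=> Hf; elim: K => [|K [d d0 Hd]]; first by exists 1.
case HK: (P K).
- exists (Num.min d (f K)); first by rewrite lt_min d0 Hf.
  move=> s; rewrite ltnS leq_eqVlt => /orP[/eqP -> _|sK Ps].
  + by rewrite ge_min lexx orbT.
  + by rewrite ge_min Hd.
- exists d => // s; rewrite ltnS leq_eqVlt => /orP[/eqP -> |sK Ps].
  + by rewrite HK.
  + exact: Hd.
Qed.

Lemma sum_ge1 N (F : 'I_N -> R) j : (forall k, 0 <= F k) -> F j <= \sum_k F k.
Proof. by move=> H; rewrite (bigD1 j) //= lerDl sumr_ge0. Qed.

End Constr.

Theorem theorem1 (R : realType) (c N M : nat) :
  (0 < N)%N -> (0 < M)%N -> (M <= N ^ c)%N ->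
  exists T : transformer R 7,
    forall (x : 'I_N -> 'I_M) (i : 'I_N),
      tf_output T (fun j => val (x j)) i =
      (if [exists j1 : 'I_N, exists j2 : 'I_N,
             (x i + x j1 + x j2) %% M == 0]%N
       then 1 else 0).
Proof.
move=> HN HM _.
have Hpos : forall s, ~~ (M %| s)%N -> 0 < 1 - cos (s%:R * th R M).
  move=> s Hs; rewrite subr_gt0 cos_mod // cos_lt1 //.
  by rewrite ltn_mod HM andbT lt0n.
have [d d0 Hd] := @fin_gap R (fun s => ~~ (M %| s)%N) (fun s => 1 - cos (s%:R * th R M)) (3 * M)%N Hpos.
set mu : R := 4 * (N * N)%:R.
have mu4 : 4 <= mu.
  rewrite /mu; have : (1 : R) <= (N * N)%:R by rewrite ler1n muln_gt0 HN.
  lra.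
set lam : R := 2 * mu / d.
set tau : R := lam - mu.
have lam0 : 0 <= lam by rewrite /lam divr_ge0 // ?(ltW d0) //; lra.
have lamd : lam * d = 2 * mu by rewrite /lam mulrVK // unitfE gt_eqF.
exists (TF R M lam tau) => x i.
rewrite /tf_output /= psiE attnE blankE.
set Z := Defs.partition _ _ _.
have EZ : Z = \sum_(j1 < N) \sum_(j2 < N) expR (lam * cos ((x i + x j1 + x j2)%:R * th R M)) + expR tau.
  by rewrite /Z /Defs.partition blankE; apply: congr2 => //; apply: eq_bigr => j1 _; apply: eq_bigr => j2 _; rewrite logitE.
have et0 : 0 < expR tau := expR_gt0 tau.
have Hmu : 1 + mu <= expR mu := expR_ge1Dx mu.
have Esplit : expR lam = expR tau * expR mu by rewrite -expRD /tau subrK.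
have S0 : 0 <= \sum_(j1 < N) \sum_(j2 < N) expR (lam * cos ((x i + x j1 + x j2)%:R * th R M)).
  by apply: sumr_ge0 => j1 _; apply: sumr_ge0 => j2 _; exact: expR_ge0.
have Z0 : 0 < Z by rewrite EZ; lra.
case: ifP => [/existsP [j1 /existsP [j2 Hj]] | Hno].
- have Hl : expR lam <= Z.
    rewrite EZ; apply: ler_wpDr; first exact: ltW.
    apply: (le_trans _ (@sum_ge1 R N _ j1 _)); last first.
      by move=> k; apply: sumr_ge0 => j _; exact: expR_ge0.
    apply: (le_trans _ (@sum_ge1 R N _ j2 _)); last by move=> k; exact: expR_ge0.
    by rewrite cos_mod // (eqP Hj) mul0r cos0 mulr1.
  have r4 : expR tau / Z <= 1/4.
    rewrite ler_pdivrMr //.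
    have : expR tau * 4 <= expR tau * expR mu by rewrite ler_pM2l //; lra.
    lra.
  rewrite !relu_pos; lra.
- have Hc : forall j1 j2 : 'I_N, cos ((x i + x j1 + x j2)%:R * th R M) <= 1 - d.
    move=> j1 j2.
    have Hs : (x i + x j1 + x j2 < 3 * M)%N.
      by have := ltn_ord (x i); have := ltn_ord (x j1); have := ltn_ord (x j2); lia.
    have Hnd : ~~ (M %| x i + x j1 + x j2)%N.
      apply/negP => Hdv; move/negbT/negP: Hno; apply; apply/existsP; exists j1; apply/existsP; exists j2.
      exact: Hdv.
    have := Hd _ Hs Hnd; lra.
  set P := expR (- mu).
  have P0 : 0 < P := expR_gt0 _.
  have PE : P * expR mu = 1 by rewrite /P expRN mulVf // gt_eqF // expR_gt0.
  have Hb : forall j1 j2 : 'I_N, expR (lam * cos ((x i + x j1 + x j2)%:R * th R M)) <= expR tau * P.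
    move=> j1 j2; rewrite /P -expRD ler_expR.
    have := ler_wpM2l lam0 (Hc j1 j2); rewrite mulrBr mulr1 lamd /tau; lra.
  have HS : \sum_(j1 < N) \sum_(j2 < N) expR (lam * cos ((x i + x j1 + x j2)%:R * th R M))
      <= (expR tau * P) * (N * N)%:R.
    apply: (@le_trans _ _ (\sum_(j1 < N) \sum_(j2 < N) (expR tau * P))).
      by apply: ler_sum => j1 _; apply: ler_sum => j2 _; exact: Hb.
    by rewrite !sumr_const card_ord -mulrnA mulr_natr.
  have nP : (N * N)%:R * P <= 1/4.
    have : P * (1 + mu) <= 1 by rewrite -[X in _ <= X]PE ler_pM2l.
    rewrite /mu; lra.
  have HZ : Z <= expR tau * (5/4).
    rewrite EZ.
    have : expR tau * P * (N * N)%:R <= expR tau * (1/4).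
      by rewrite -mulrA ler_pM2l // mulrC.
    lra.
  have r4 : 4/5 <= expR tau / Z.
    rewrite ler_pdivlMr //; lra.
  rewrite !relu_neg; lra.
Qed.
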